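(* For all integers $a,b\ge 0$, $\ell_{\rm leaf}(a,0)\,\ell_{\rm leaf}(0,b)\ge\ell_{\rm leaf}(a,b)$.
   Context: Fix $\rho^1,\rho^0>0$ and let $B$ denote the Beta function. Define $\ell_{\rm leaf}(c^1,c^0)=\dfrac{B(c^1+\rho^1,\,c^0+\rho^0)}{B(\rho^1,\rho^0)}$ for integers $c^1,c^0\ge0$. *)

(* Defs.v *)
From mathcomp Require Import all_boot all_order all_algebra.
From mathcomp Require Import all_classical all_reals all_analysis.
Import Order.TTheory GRing.Theory Num.Theory.
Local Open Scope classical_set_scope.
Local Open Scope ring_scope.

Definition Beta (R : realType) (x y : R) : R :=
  Rintegral (@lebesgue_measure R) `[0%R, 1%R]
    (fun t => powR t (x - 1) * powR (1 - t) (y - 1)).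

Definition l_leaf (R : realType) (rho1 rho0 : R) (c1 c0 : nat) : R :=
  @Beta R (c1%:R + rho1) (c0%:R + rho0) / @Beta R rho1 rho0.

(* Main.v *)
Require Import Defs.
From mathcomp Require Import all_boot all_order all_algebra.
From mathcomp Require Import all_classical all_reals all_analysis.
From mathcomp Require Import lra ring.
From mathcomp Require Import measurable_realfun.
Import Order.TTheory GRing.Theory Num.Theory.
Local Open Scope ring_scope.

Section H.
Variable R : realType.

Definition Fw (p q : R) (t : R) := powR t (p - 1) * powR (1 - t) (q - 1).

Lemma powR_split (t p : R) (n : nat) : 0 <= t -> 0 < p ->
  powR t (n%:R + p - 1) = t ^+ n * powR t (p - 1).
Proof.
move=> t0 p0; case: n => [|n].
  by rewrite add0r expr0 mul1r.
have H : 0 < n.+1%:R + (p - 1) :> R.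
  have : 1 <= n.+1%:R :> R by rewrite ler1n.
  lra.
rewrite -addrA (@powRD _ t (n.+1%:R) (p - 1)) ?powR_mulrn //.
by rewrite gt_eqF.
Qed.

Lemma Fw_split (t : R) (r1 r0 : R) (a b : nat) : 0 <= t <= 1 -> 0 < r1 -> 0 < r0 ->
  Fw (a%:R + r1) (b%:R + r0) t = t ^+ a * (1 - t) ^+ b * Fw r1 r0 t.
Proof.
move=> /andP[t0 t1] h1 h0; rewrite /Fw powR_split // powR_split ?subr_ge0 //.
ring.
Qed.

Lemma Fw_ge0 p q t : 0 <= Fw p q t.
Proof. by rewrite /Fw mulr_ge0 ?powR_ge0. Qed.

Lemma measurable_Fw (p q : R) :
  measurable_fun (`[0%R, 1%R]%classic : set R) (fun t : R => ((Fw p q t)%:E : \bar R)).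
Proof.
apply/measurable_EFinP.
rewrite /Fw.
apply: measurable_funM.
  apply: measurable_funTS; exact: measurable_powR.
apply: measurable_funTS.
apply: (measurableT_comp (measurable_powR _)).
exact: measurable_funB.
Qed.


Local Open Scope classical_set_scope.
Definition Dom : set R := `[0%R, 1%R].
Definition J (p q : R) := (\int[@lebesgue_measure R]_(t in Dom) (Fw p q t)%:E)%E.

Lemma Beta_J (p q : R) : @Beta R p q = fine (J p q).
Proof. by []. Qed.

Lemma mDom : measurable Dom.
Proof. exact: measurable_itv. Qed.

Lemma inDom (t : R) : Dom t -> 0 <= t <= 1.
Proof. by rewrite /Dom /= in_itv. Qed.

Lemma J_ge0 (p q : R) : (0 <= J p q)%E.
Proof. by apply: integral_ge0 => t _; rewrite lee_fin Fw_ge0. Qed.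

Lemma J_le (r1 r0 : R) (n m : nat) : 0 < r1 -> 0 < r0 ->
  (J (n%:R + r1) (m%:R + r0) <= J r1 r0)%E.
Proof.
move=> h1 h0; apply: ge0_le_integral.
- exact: mDom.
- by move=> t _; rewrite lee_fin Fw_ge0.
- exact: measurable_Fw.
- exact: measurable_Fw.
move=> t /inDom /[dup] tD /andP[t0 t1]; rewrite lee_fin Fw_split //.
apply: ler_piMl; first exact: Fw_ge0.
apply: mulr_ile1; rewrite ?exprn_ge0 ?exprn_ile1 ?subr_ge0 //; lra.
Qed.

Lemma J_lin (p q p' q' al be : R) : 0 <= al -> 0 <= be ->
  (\int[@lebesgue_measure R]_(t in Dom) (al * Fw p q t + be * Fw p' q' t)%:E
   = al%:E * J p q + be%:E * J p' q')%E.
Proof.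
move=> al0 be0.
under eq_integral do rewrite EFinD !EFinM.
rewrite ge0_integralD //.
- rewrite ge0_integralZl_EFin //.
  + rewrite ge0_integralZl_EFin //.
    * exact: mDom.
    * by move=> t _; rewrite lee_fin Fw_ge0.
    * exact: measurable_Fw.
  + exact: mDom.
  + by move=> t _; rewrite lee_fin Fw_ge0.
  + exact: measurable_Fw.
- exact: mDom.
- by move=> t _; rewrite -EFinM lee_fin mulr_ge0 ?Fw_ge0.
- apply/measurable_EFinP; apply: measurable_funM => //.
  by apply/measurable_EFinP; exact: measurable_Fw.
- by move=> t _; rewrite -EFinM lee_fin mulr_ge0 ?Fw_ge0.
- apply/measurable_EFinP; apply: measurable_funM => //.
  by apply/measurable_EFinP; exact: measurable_Fw.
Qed.


Lemma key (r1 r0 c : R) (a b : nat) : 0 < r1 -> 0 < r0 -> 0 <= c <= 1 ->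
  (J (a%:R + r1) (b%:R + r0) + (c ^+ a * (1 - c) ^+ b)%:E * J r1 r0
   <= ((1 - c) ^+ b)%:E * J (a%:R + r1) (0%:R + r0)
      + (c ^+ a)%:E * J (0%:R + r1) (b%:R + r0))%E.
Proof.
move=> h1 h0 /andP[c0 c1].
have n0 : 0 <= c ^+ a by rewrite exprn_ge0.
have m0 : 0 <= (1 - c) ^+ b by rewrite exprn_ge0 // subr_ge0.
rewrite -[J (a%:R + r1) _]mul1e -J_lin ?mulr_ge0 // -J_lin //.
apply: ge0_le_integral.
- exact: mDom.
- by move=> t _; rewrite lee_fin addr_ge0 // mulr_ge0 ?Fw_ge0 // mulr_ge0.
- apply/measurable_EFinP; apply: measurable_funD; apply: measurable_funM => //;
  by apply/measurable_EFinP; exact: measurable_Fw.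
- apply/measurable_EFinP; apply: measurable_funD; apply: measurable_funM => //;
  by apply/measurable_EFinP; exact: measurable_Fw.
move=> t /inDom /[dup] tD /andP[t0 t1]; rewrite lee_fin !Fw_split //.
rewrite !expr0 !mulr1 !mul1r.
set W := Fw r1 r0 t.
have W0 : 0 <= W by exact: Fw_ge0.
set X := t ^+ a; set Y := (1 - t) ^+ b; set n := c ^+ a; set m := (1 - c) ^+ b.
have P : (X - n) * (Y - m) <= 0.
  have [tc|ct] := lerP t c.
    have h1' : X <= n by apply: lerXn2r; rewrite ?nnegrE.
    have h2' : m <= Y by apply: lerXn2r; rewrite ?nnegrE; lra.
    rewrite mulr_le0_ge0 // ?subr_le0 ?subr_ge0 //.
  have h1' : n <= X by apply: lerXn2r; rewrite ?nnegrE; lra.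
  have h2' : Y <= m by apply: lerXn2r; rewrite ?nnegrE; lra.
  by rewrite mulr_ge0_le0 // ?subr_le0 ?subr_ge0.
have P2 : (X - n) * (Y - m) * W <= 0 by rewrite mulr_le0_ge0.
rewrite -subr_le0; apply: le_trans P2; rewrite le_eqVlt; apply/orP; left; apply/eqP.
ring.
Qed.

End H.
Arguments J {R}.
Arguments Fw {R}.
Arguments key {R}.
Arguments J_ge0 {R}.
Arguments Beta_J {R}.
Arguments J_le {R}.

Theorem lemma13 (R : realType) (rho1 rho0 : R) (h1 : 0 < rho1) (h0 : 0 < rho0)
  (a b : nat) :
  @l_leaf R rho1 rho0 a b <= @l_leaf R rho1 rho0 a 0 * @l_leaf R rho1 rho0 0 b.
Proof.
rewrite /l_leaf.
set B0 := @Beta R rho1 rho0.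
have [B00|B0n0] := eqVneq B0 0.
  by rewrite B00 invr0 !mulr0.
have J00E : J rho1 rho0 = B0%:E.
  move: (J_ge0 rho1 rho0) B0n0; rewrite /B0 Beta_J.
  by case: (J rho1 rho0) => //= _; rewrite eqxx.
have B0gt0 : 0 < B0.
  rewrite lt0r B0n0 /=; rewrite -lee_fin -J00E; exact: J_ge0.
have JE : forall n m : nat, J (n%:R + rho1) (m%:R + rho0)
    = (@Beta R (n%:R + rho1) (m%:R + rho0))%:E.
  move=> n m; rewrite Beta_J fineK // ge0_fin_numE ?J_ge0 //.
  apply: le_lt_trans (J_le rho1 rho0 n m h1 h0) _.
  by rewrite J00E ltey.
have Ile : forall n m : nat, 0 <= @Beta R (n%:R + rho1) (m%:R + rho0) <= B0.
  move=> n m; rewrite -!lee_fin -JE -J00E J_ge0 /=; exact: J_le.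
have [c [c01 cE]] : exists c, 0 <= c <= 1 /\ c ^+ a * B0 = @Beta R (a%:R + rho1) (0%:R + rho0).
  case: (a) => [|a'].
    exists 0; rewrite lexx ler01 expr0 mul1r; split => //.
    by rewrite !add0r.
  have /andP[I0 IB] := Ile a'.+1 0%N.
  set I := @Beta R (a'.+1%:R + rho1) (0%:R + rho0) in I0 IB *.
  pose x := I / B0.
  have x0 : 0 <= x by rewrite divr_ge0 // ltW.
  have x1 : x <= 1 by rewrite ler_pdivrMr // mul1r.
  exists (powR x (a'.+1%:R)^-1).
  have cE : (powR x (a'.+1%:R)^-1) ^+ a'.+1 = x.
    rewrite -powR_mulrn ?powR_ge0 // -powRrM mulVf ?powRr1 //.

  split; last by rewrite cE /x divfK // gt_eqF.
  rewrite powR_ge0 /= -(expr_le1 (n := a'.+1)) ?powR_ge0 //.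
  by rewrite cE.
set I11 := @Beta R (a%:R + rho1) (b%:R + rho0).
set I10 := @Beta R (a%:R + rho1) (0%:R + rho0).
set I01 := @Beta R (0%:R + rho1) (b%:R + rho0).
have := key rho1 rho0 c a b h1 h0 c01.
rewrite J00E !JE -!EFinM -!EFinD lee_fin -/I11 -/I10 -/I01.
set n := c ^+ a; set m := (1 - c) ^+ b.
move=> K.
have cE2 : n * B0 = I10 by [].
have K2 : I11 <= n * I01.
  rewrite -cE2 in K. lra.
rewrite -cE2 mulfK ?gt_eqF // mulrA ler_pM2r ?invr_gt0 //.
Qed.
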